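(* Let $\Pi_n=\{\pi_1,\ldots,\pi_n\}$ be a finite set of policies of a discrete mean-field game (setting in the context) with $J$ $\mu$-diff-affine, and let $M_{ij}=J(\pi_i,\mu^{\pi_j})$. Let $\rho$ be a finitely supported distribution over $\Delta(\Pi_n)$ (writing $\nu_i=\nu(\pi_i)$). (i) If $\sum_i\max_k\sum_\nu\rho(\nu)\,\nu_i\sum_j\nu_j\big(M_{kj}-M_{ij}\big)\le0$, then $\sum_i\max_k\sum_\nu\rho(\nu)\nu_i\big(J(\pi_k,\mu(\nu))-J(\pi_i,\mu(\nu))\big)\le0$; in particular $\rho$ is a mean-field correlated equilibrium when deviations are restricted to $\Pi_n$. (ii) If $\max_k\sum_\nu\rho(\nu)\sum_i\sum_j\nu_i\nu_j\big(M_{kj}-M_{ij}\big)\le0$, then $\max_k\sum_\nu\rho(\nu)\big(J(\pi_k,\mu(\nu))-J(\pi(\nu),\mu(\nu))\big)\le0$, i.e. $\rho$ is a mean-field coarse correlated equilibrium when deviations are restricted to $\Pi_n$.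
   Context: A discrete mean-field game consists of finite state set $\mathcal X$, finite action set $\mathcal A$, reward $r:\mathcal X\times\mathcal A\times\Delta(\mathcal X)\to\mathbb R$, transitions $p(x'\mid x,a)$ independent of the population distribution, initial distribution $\mu_0$. A policy is $\pi:\mathcal X\to\Delta(\mathcal A)$; $\mu^\pi$ is its state occupancy measure; $J(\pi,\mu)=\sum_{x,a}\mu^\pi(x)\pi(x,a)r(x,a,\mu)$. For $\nu\in\Delta(\Pi_n)$, $\mu(\nu)=\sum_j\nu(\pi_j)\mu^{\pi_j}$ and $J(\pi(\nu),\mu)=\sum_i\nu(\pi_i)J(\pi_i,\mu)$, where $\pi(\nu)$ samples a policy from $\nu$ at the start and plays it. $J$ is $\mu$-diff-affine if for all policies $\pi,\pi'$ the map $\mu\mapsto J(\pi,\mu)-J(\pi',\mu)$ is affine. A mean-field correlated equilibrium (deviations in $\Pi_n$) is a $\rho$ with $\sum_\nu\rho(\nu)\nu(\pi_i)(J(\pi_k,\mu(\nu))-J(\pi_i,\mu(\nu)))\le0$ for all $i,k$. *)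

(* Defs.v *)
From HB Require Import structures.
From mathcomp Require Import all_boot all_order all_algebra.
Set Implicit Arguments. Unset Strict Implicit. Unset Printing Implicit Defensive.
Import Order.TTheory GRing.Theory Num.Theory.
Local Open Scope ring_scope.

Definition is_dist (R : numDomainType) (T : finType) (f : T -> R) : Prop :=
  (forall t, 0 <= f t) /\ \sum_t f t = 1.

Section MFG.
Variables (R : realFieldType) (X A : finType).
(* transition kernel p(x' | x, a) : p x a x' *)
Variable p : X -> A -> X -> R.
Variable mu0 : {ffun X -> R}.
Variable gamma : R.
Variable r : X -> A -> {ffun X -> R} -> R.

Definition is_policy (pi : X -> A -> R) : Prop := forall x, is_dist (pi x).
Definition is_kernel : Prop := forall x a, is_dist (p x a).

Definition Pmat (pi : X -> A -> R) : 'M[R]_#|X| :=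
  \matrix_(i, j) \sum_a pi (enum_val i) a * p (enum_val i) a (enum_val j).

(* discounted state occupancy measure:
   mu^pi = (1 - gamma) sum_t gamma^t mu0 P_pi^t = (1-gamma) mu0 (I - gamma P_pi)^-1 *)
Definition occupancy (pi : X -> A -> R) : {ffun X -> R} :=
  let m0 : 'rV[R]_#|X| := \row_j mu0 (enum_val j) in
  let occ := (1 - gamma) *: (m0 *m invmx (1%:M - gamma *: Pmat pi)) in
  [ffun x => occ 0 (enum_rank x)].

Definition J (pi : X -> A -> R) (mu : {ffun X -> R}) : R :=
  \sum_x \sum_a occupancy pi x * pi x a * r x a mu.

Definition mu_diff_affine : Prop :=
  forall pi pi' : X -> A -> R, is_policy pi -> is_policy pi' ->
  forall (mu1 mu2 : {ffun X -> R}) (t : R),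
    is_dist mu1 -> is_dist mu2 -> 0 <= t <= 1 ->
    J pi [ffun x => t * mu1 x + (1 - t) * mu2 x]
      - J pi' [ffun x => t * mu1 x + (1 - t) * mu2 x]
    = t * (J pi mu1 - J pi' mu1) + (1 - t) * (J pi mu2 - J pi' mu2).

Definition mu_of (n : nat) (pis : 'I_n -> X -> A -> R) (nu : 'I_n -> R)
  : {ffun X -> R} :=
  [ffun x => \sum_j nu j * occupancy (pis j) x].

(* J(pi(nu), mu) = sum_i nu(pi_i) J(pi_i, mu) *)
Definition J_mix (n : nat) (pis : 'I_n -> X -> A -> R) (nu : 'I_n -> R)
  (mu : {ffun X -> R}) : R :=
  \sum_i nu i * J (pis i) mu.

End MFG.

Definition maxI (R : realDomainType) (n : nat) (F : 'I_n.+1 -> R) : R :=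
  \big[Num.max/F ord0]_(k < n.+1) F k.

(* Main.v *)
Require Import Defs.
From HB Require Import structures.
From mathcomp Require Import all_boot all_order all_algebra.
Import Order.TTheory GRing.Theory Num.Theory.
Local Open Scope ring_scope.
Lemma sum_rank (R : realFieldType) (X: finType) (F : 'I_#|X| -> R): \sum_x F (enum_rank x) = \sum_i F i.
Proof. rewrite (reindex (fun i : 'I_#|X| => enum_val i)) /=; last first.
  by exists enum_rank => x _; [rewrite enum_valK | rewrite enum_rankK].
by apply: eq_bigr => i _; rewrite enum_valK. Qed.
Lemma sum_val (R : realFieldType) (X: finType) (F : X -> R): \sum_(i < #|X|) F (enum_val i) = \sum_x F x.
Proof. rewrite -(@sum_rank R X (fun i => F (enum_val i))). by apply: eq_bigr => x _; rewrite enum_rankK. Qed.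
Lemma sign_lemma (R : realFieldType) N (P : 'M[R]_N) (g : R) (y : 'I_N -> R) :
  0 <= g < 1 -> (forall i k, 0 <= P i k) -> (forall i, \sum_k P i k = 1) ->
  (forall i, 0 <= y i - g * \sum_k P i k * y k) -> forall i, 0 <= y i.
Proof.
move=> /andP[g0 g1] Pge0 Psum Hy i.
have := @real_arg_minP R _ i predT (fun k => y k) isT (fun k _ => num_real (y k)).
case=> i0 _ Hmin.
have Hm : forall k, y i0 <= y k by move=> k; apply: Hmin.
suff : 0 <= y i0 by move=> h; apply: le_trans h (Hm i).
have h1 : y i0 <= \sum_k P i0 k * y k.
  rewrite -[y i0]mul1r -(Psum i0) mulr_suml.
  by apply: ler_sum => k _; apply: ler_wpM2l.
have h2 : g * y i0 <= y i0.
  apply: le_trans (_ : g * \sum_k P i0 k * y k <= _).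
    by apply: ler_wpM2l.
  by have := Hy i0; rewrite subr_ge0.
have : 0 <= (1 - g) * y i0 by rewrite mulrBl mul1r subr_ge0.
by rewrite pmulr_rge0 // subr_gt0.
Qed.
Section Occ.
Variables (R : realFieldType) (X A : finType) (p : X -> A -> X -> R) (mu0 : {ffun X -> R}) (gamma : R).
Hypotheses (Hp : is_kernel p) (Hmu0 : is_dist mu0) (Hg : 0 <= gamma < 1).
Variable pi : X -> A -> R.
Hypothesis Hpi : is_policy pi.
Local Notation N := #|X|.
Local Notation P := (Pmat p pi).

Lemma Pmat_ge0 i k : 0 <= P i k.
Proof.
rewrite mxE; apply: sumr_ge0 => a _; apply: mulr_ge0.
  by case: (Hpi (enum_val i)) => h _; apply: h.
by case: (Hp (enum_val i) a) => h _; apply: h.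
Qed.

Lemma Pmat_sum i : \sum_k P i k = 1.
Proof.
under eq_bigr => k _ do rewrite mxE.
rewrite exchange_big /=.
case: (Hpi (enum_val i)) => _ <-.
apply: eq_bigr => a _; rewrite -mulr_sumr.
rewrite (@sum_val R X (fun x => p (enum_val i) a x)).
by case: (Hp (enum_val i) a) => _ ->; rewrite mulr1.
Qed.

Definition B := 1%:M - gamma *: P.

Lemma B_apply (y : 'I_N -> R) i :
  \sum_k B i k * y k = y i - gamma * \sum_k P i k * y k.
Proof.
under eq_bigr => k _ do rewrite !mxE mulrBl.
rewrite sumrB mulr_sumr; congr (_ - _); last first.
  by apply: eq_bigr => k _; rewrite mulrA mxE.
rewrite (bigD1 i) //= eqxx mulr1n mul1r big1 ?addr0 //.
by move=> k /negbTE; rewrite eq_sym => ->; rewrite mulr0n mul0r.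
Qed.

Lemma B_unit : B \in unitmx.
Proof.
rewrite unitmxE unitfE -det_tr; apply/negP => /det0P [v vn0 vB].
have Hv : forall i, \sum_k B i k * v 0 k = 0.
  move=> i; have := vB; move/matrixP/(_ 0 i); rewrite !mxE => E.
  rewrite -[RHS]E; apply: eq_bigr => k _; by rewrite mulrC [B^T _ _]mxE.
have h1 := @sign_lemma R N P gamma (fun k => v 0 k) Hg Pmat_ge0 Pmat_sum.
have h2 := @sign_lemma R N P gamma (fun k => - v 0 k) Hg Pmat_ge0 Pmat_sum.
move/eqP: vn0 => vn0; apply: vn0; apply/matrixP => a k; rewrite ord1 mxE.
apply/eqP; rewrite eq_le; apply/andP; split.
  rewrite -oppr_ge0; apply: h2 => i; rewrite -B_apply.
  by under eq_bigr => j _ do rewrite mulrN; rewrite sumrN Hv oppr0.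
by apply: h1 => i; rewrite -B_apply Hv.
 
Qed.

Lemma Binv_ge0 i j : 0 <= invmx B i j.
Proof.
apply: (@sign_lemma R N P gamma (fun k => invmx B k j) Hg Pmat_ge0 Pmat_sum) => k.
have E := mulmxV B_unit; move/matrixP/(_ k j): E; rewrite mxE [RHS]mxE => E.
rewrite -(B_apply (fun l => invmx B l j)) /= E.
by case: (k == j); rewrite ?mulr1n ?mulr0n ?ler01 ?lexx.
Qed.

Lemma B_const : B *m const_mx 1 = (1 - gamma) *: (const_mx 1 : 'cV[R]_N).
Proof.
apply/matrixP => i a.
have E := B_apply (fun _ => 1) i; rewrite /= in E.
rewrite [LHS]mxE (eq_bigr (fun k => B i k * 1)); last by move=> k _; rewrite [const_mx _ _ _]mxE.
rewrite E; under eq_bigr => k _ do rewrite mulr1.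
by rewrite Pmat_sum mulr1 !mxE mulr1.
Qed.

Lemma Binv_rows : (1 - gamma) *: (invmx B *m const_mx 1) = (const_mx 1 : 'cV[R]_N).
Proof. by rewrite scalemxAr -B_const mulKmx // B_unit. Qed.

Lemma occ_dist : is_dist (occupancy p mu0 gamma pi).
Proof.
case: Hmu0 => m0ge0 m0sum.
have g1 : 0 <= 1 - gamma by case/andP: Hg => _ h; rewrite subr_ge0 ltW.
split.
  move=> x; rewrite /occupancy ffunE !mxE; apply: mulr_ge0 => //.
  idtac; apply: sumr_ge0 => i _; rewrite mxE; apply: mulr_ge0 => //.
  exact: Binv_ge0.
rewrite /occupancy.
under eq_bigr => x _ do rewrite ffunE.
rewrite (@sum_rank R X (fun j => ((1 - gamma) *: ((\row_j0 mu0 (enum_val j0)) *m invmx (1%:M - gamma *: P))) 0 j)).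
have E : ((1 - gamma) *: ((\row_j0 mu0 (enum_val j0)) *m invmx B) *m (const_mx 1 : 'cV[R]_N)) 0 0
   = ((\row_j0 mu0 (enum_val j0)) *m (const_mx 1 : 'cV[R]_N)) 0 0.
  by rewrite -scalemxAl -mulmxA scalemxAr Binv_rows.
rewrite [LHS]mxE [RHS]mxE in E.
rewrite -[RHS]m0sum -(@sum_val R X mu0).
transitivity (\sum_j (\row_j0 mu0 (enum_val j0)) 0 j * (const_mx 1 : 'cV[R]_N) j 0); last first.
  by apply: eq_bigr => j _; rewrite !mxE mulr1.
rewrite -E; apply: eq_bigr => j _; by rewrite [const_mx _ _ _]mxE mulr1.
Qed.
End Occ.

Lemma mix_dist (R : realFieldType) (X I : finType) (c : I -> R) (mus : I -> {ffun X -> R}) :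
  is_dist c -> (forall j, is_dist (mus j)) -> is_dist [ffun x => \sum_j c j * mus j x].
Proof.
move=> [c0 c1] Hm; split.
  move=> x; rewrite ffunE; apply: sumr_ge0 => j _; apply: mulr_ge0 => //.
  by case: (Hm j).
under eq_bigr => x _ do rewrite ffunE.
rewrite exchange_big /= -c1; apply: eq_bigr => j _.
by rewrite -mulr_sumr; case: (Hm j) => _ ->; rewrite mulr1.
Qed.

Lemma affine_mix (R : realFieldType) (X : finType) (f : {ffun X -> R} -> R)
 (Hf : forall (mu1 mu2 : {ffun X -> R}) (t : R), is_dist mu1 -> is_dist mu2 -> 0 <= t <= 1 ->
    f [ffun x => t * mu1 x + (1 - t) * mu2 x] = t * f mu1 + (1 - t) * f mu2) :
 forall N (c : 'I_N.+1 -> R) (mus : 'I_N.+1 -> {ffun X -> R}), is_dist c ->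
   (forall j, is_dist (mus j)) ->
  f [ffun x => \sum_j c j * mus j x] = \sum_j c j * f (mus j).
Proof.
elim=> [|N IH] c mus [c0 c1] Hm.
  move: c1; rewrite big_ord1 => c1.
  rewrite big_ord1 c1 mul1r; congr f; apply/ffunP => x.
  by rewrite ffunE big_ord1 c1 mul1r.
move: (c1); rewrite big_ord_recr /= => c1'.
set s := \sum_(i < N.+1) c (widen_ord (leqnSn N.+1) i) in c1'.
have s0 : 0 <= s by apply: sumr_ge0.
have e1 : 1 - s = c ord_max by rewrite -c1' addrC addrK.
have [sz|snz] := eqVneq s 0.
  have cz : forall i, c (widen_ord (leqnSn N.+1) i) = 0.
    by move=> i; apply: (psumr_eq0P _ sz) => // j _; apply: c0.
  have cm : c ord_max = 1 by rewrite -e1 sz subr0.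
  rewrite big_ord_recr /= big1 ?add0r; last by move=> i _; rewrite cz mul0r.
  rewrite cm mul1r; congr f; apply/ffunP => x.
  rewrite ffunE big_ord_recr /= big1 ?add0r; last by move=> i _; rewrite cz mul0r.
  by rewrite cm mul1r.
set c' := fun i : 'I_N.+1 => c (widen_ord (leqnSn N.+1) i) / s.
have dc' : is_dist c'.
  split; first by move=> i; apply: divr_ge0.
  by rewrite /c' -mulr_suml divff.
set mu' := [ffun x => \sum_j c' j * mus (widen_ord (leqnSn N.+1) j) x].
have IH' := IH c' (fun j => mus (widen_ord (leqnSn N.+1) j)) dc' (fun j => Hm _).
have s1 : s <= 1 by rewrite -c1' lerDl.
have := Hf mu' (mus ord_max) s (@mix_dist _ _ _ _ _ dc' (fun j => Hm _)) (Hm _).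
rewrite s0 s1 => /(_ isT).
have -> : [ffun x => s * mu' x + (1 - s) * mus ord_max x] = [ffun x => \sum_j c j * mus j x].
  apply/ffunP => x; rewrite [LHS]ffunE [RHS]ffunE [RHS]big_ord_recr /= e1; congr (_ + _).
  rewrite /mu' ffunE mulr_sumr; apply: eq_bigr => i _.
  by rewrite /c' mulrA mulrCA divff // mulr1.
move=> ->; rewrite IH' e1 [RHS]big_ord_recr /=; congr (_ + _).
rewrite mulr_sumr; apply: eq_bigr => i _.
by rewrite /c' mulrA mulrCA divff // mulr1.
Qed.

Lemma maxI_ge (R : realDomainType) n (F : 'I_n.+1 -> R) k : F k <= maxI F.
Proof. by rewrite /maxI (bigD1 k) //= le_max lexx. Qed.
Arguments maxI_ge {R n} F k.

Theorem mainTheorem10 (R : realFieldType) (X A : finType)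
  (p : X -> A -> X -> R) (mu0 : {ffun X -> R}) (gamma : R)
  (r : X -> A -> {ffun X -> R} -> R)
  (n : nat) (pis : 'I_n.+1 -> X -> A -> R)
  (m : nat) (w : 'I_m -> R) (nus : 'I_m -> 'I_n.+1 -> R) :
  is_kernel p -> is_dist mu0 -> 0 <= gamma < 1 ->
  (forall i, is_policy (pis i)) ->
  mu_diff_affine p mu0 gamma r ->
  is_dist w -> (forall l, is_dist (nus l)) ->
  let M i j := J p mu0 gamma r (pis i) (occupancy p mu0 gamma (pis j)) in
  let muv l := mu_of p mu0 gamma pis (nus l) in
  (* (i) *)
  ((\sum_i maxI (fun k => \sum_l w l * nus l i *
        \sum_j nus l j * (M k j - M i j)) <= 0) ->
     (\sum_i maxI (fun k => \sum_l w l * nus l i *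
        (J p mu0 gamma r (pis k) (muv l) - J p mu0 gamma r (pis i) (muv l))) <= 0)
     /\ (forall i k, \sum_l w l * nus l i *
        (J p mu0 gamma r (pis k) (muv l) - J p mu0 gamma r (pis i) (muv l)) <= 0))
  /\
  (* (ii) *)
  ((maxI (fun k => \sum_l w l * \sum_i \sum_j nus l i * nus l j * (M k j - M i j)) <= 0) ->
     maxI (fun k => \sum_l w l *
        (J p mu0 gamma r (pis k) (muv l) - J_mix p mu0 gamma r pis (nus l) (muv l))) <= 0).
Proof.
move=> Hp Hmu Hg Hpis Haff Hw Hnus M muv.
have occd : forall j, is_dist (occupancy p mu0 gamma (pis j)).
  by move=> j; apply: occ_dist.
have D : forall l k i, J p mu0 gamma r (pis k) (muv l) - J p mu0 gamma r (pis i) (muv l)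
   = \sum_j nus l j * (M k j - M i j).
  move=> l k i.
  exact: (@affine_mix R X (fun mu => J p mu0 gamma r (pis k) mu - J p mu0 gamma r (pis i) mu)
     (Haff _ _ (Hpis k) (Hpis i)) n (nus l) (fun j => occupancy p mu0 gamma (pis j)) (Hnus l) occd).
split.
  move=> H.
  set G := fun i k => \sum_l w l * nus l i *
        (J p mu0 gamma r (pis k) (muv l) - J p mu0 gamma r (pis i) (muv l)).
  have EG : forall i, maxI (G i) = maxI (fun k => \sum_l w l * nus l i *
        \sum_j nus l j * (M k j - M i j)).
    have FG : forall i k, G i k = \sum_l w l * nus l i * \sum_j nus l j * (M k j - M i j).
      by move=> i k; rewrite /G; apply: eq_bigr => l _; rewrite D.
    by move=> i; rewrite /maxI FG; apply: eq_bigr => k _; exact: FG.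
  have S : \sum_i maxI (G i) <= 0.
    by under eq_bigr => i _ do rewrite EG.
  have G0 : forall i, 0 <= maxI (G i).
    move=> i; apply: le_trans (maxI_ge (G i) i).
    by rewrite /G big1 // => l _; rewrite subrr mulr0.
  split => //.
  move=> i k; apply: le_trans (maxI_ge (G i) k) _.
  apply: le_trans S; rewrite (bigD1 i) //= lerDl.
  by apply: sumr_ge0 => j _.
move=> H; apply: le_trans H; rewrite le_eqVlt; apply/orP; left; apply/eqP.
have E : forall k, \sum_l w l *
        (J p mu0 gamma r (pis k) (muv l) - J_mix p mu0 gamma r pis (nus l) (muv l))
   = \sum_l w l * \sum_i \sum_j nus l i * nus l j * (M k j - M i j).
  move=> k; apply: eq_bigr => l _; congr (_ * _).
  rewrite /J_mix.
  have -> : J p mu0 gamma r (pis k) (muv l) = \sum_i nus l i * J p mu0 gamma r (pis k) (muv l).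
    by rewrite -mulr_suml; case: (Hnus l) => _ ->; rewrite mul1r.
  rewrite -sumrB; apply: eq_bigr => i _; rewrite -mulrBr D mulr_sumr.
  by apply: eq_bigr => j _; rewrite mulrA.
rewrite /maxI E; apply: eq_bigr => k _; exact: E.
Qed.
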